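(* Let $p,q,r$ be pairwise distinct primes with $p<q$ and $p<r$, and let $n$ be an integer with $1\le n<pqr$. For a finite sequence $(t_1,\dots,t_l)$ and $d\in\{0,1,2\}$ let $N_d(t_1,\dots,t_l)$ be the number of indices $i$ with $t_i=d$. Put $S_+=(F_n,F_{n-p-q},F_{n-q-r},F_{n-r-p})$ and $S_-=(F_{n-p},F_{n-q},F_{n-r},F_{n-p-q-r})$. Then $$a_{pqr}(n)-a_{pqr}(n-1)=\tfrac12\big(N_1(S_-)-N_1(S_+)\big)=N_0(S_+)-N_0(S_-)=N_2(S_+)-N_2(S_-).$$
   Context: $\Phi_{pqr}(x)=\prod_{0<k<pqr,\ \gcd(k,pqr)=1}(x-\zeta^k)$, $\zeta$ a primitive $pqr$-th root of unity, with coefficients $a_{pqr}(n)$ (zero outside $[0,\deg\Phi_{pqr}]$). For each integer $k$, let $a_k,b_k,c_k$ be the unique integers with $0\le a_k<p$, $0\le b_k<q$, $0\le c_k<r$ and $k\equiv a_kqr+b_krp+c_kpq \pmod{pqr}$, and define $F_k=\frac{a_k}{p}+\frac{b_k}{q}+\frac{c_k}{r}-\frac{k}{pqr}$. *)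

(* Defs.v *)
From HB Require Import structures.
From mathcomp Require Import all_boot all_order all_algebra all_field.
Unset Strict Implicit. Unset Printing Implicit Defensive.
Import Order.TTheory GRing.Theory Num.Theory.
Local Open Scope ring_scope.

Definition acoef (p q r : nat) (n : nat) : int := ('Phi_(muln (muln p q) r))`_n.

(* The triple (a_k, b_k, c_k) with 0<=a_k<p, 0<=b_k<q, 0<=c_k<r and
   k = a_k qr + b_k rp + c_k pq (mod pqr).  Defined by picking the
   (unique, under the paper's hypotheses) such triple. *)
Definition abc_pred (p q r : nat) (k : int) (t : 'I_p * 'I_q * 'I_r) : bool :=
  let a := nat_of_ord t.1.1 in let b := nat_of_ord t.1.2 in
  let c := nat_of_ord t.2 in
  (Posz (muln (muln p q) r) %| k
     - Posz (addn (addn (muln a (muln q r)) (muln b (muln r p))) (muln c (muln p q))))%Z.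

Definition abc (p q r : nat) (k : int) := [pick t | abc_pred p q r k t].

Definition F (p q r : nat) (k : int) : rat :=
  match abc p q r k with
  | Some (a, b, c) =>
      (nat_of_ord a)%:R / p%:R + (nat_of_ord b)%:R / q%:R
      + (nat_of_ord c)%:R / r%:R - k%:~R / (muln (muln p q) r)%:R
  | None => 0
  end.

Definition Ncount (d : nat) (s : seq rat) : nat := count (pred1 (d%:R)) s.

(* Main.v *)
From Stdlib Require Import ZArith Lia FunctionalExtensionality.
Require Import Defs.
From HB Require Import structures.
From mathcomp Require Import all_boot all_order all_algebra all_field.
Import Order.TTheory GRing.Theory Num.Theory.
Local Open Scope ring_scope.
Delimit Scope Z_scope with ZZ.

Ltac clean := repeat match goal with H : is_true _ |- _ => clear H end.
Ltac zl := clean; first [lia | nia].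

Definition toZ (x : int) : Z :=
  match x with Posz n => Z.of_nat n | Negz n => (- Z.of_nat n - 1)%ZZ end.

Lemma toZ_nat (n : nat) : toZ n%:Z = Z.of_nat n.
Proof. by []. Qed.

Lemma toZ0 : toZ 0 = 0%ZZ. Proof. by []. Qed.
Lemma toZ1 : toZ 1 = 1%ZZ. Proof. by []. Qed.
Lemma toZ2 : toZ 2 = 2%ZZ. Proof. by []. Qed.

Lemma toZ_subnat (a b : nat) : toZ (a%:Z - b%:Z) = (Z.of_nat a - Z.of_nat b)%ZZ.
Proof.
case: (leqP b a) => h.
  rewrite subzn //=; move/ssrnat.leP: h => h; rewrite Nat2Z.inj_sub //.
have -> : a%:Z - b%:Z = - ((b - a)%N)%:Z by rewrite -subzn ?opprB // ltnW.
have : (0 < b - a)%N by rewrite subn_gt0.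
case E: (b - a)%N => [|m] // _.
rewrite -NegzE /=.
have : (b - a)%N = (b - a)%coq_nat by [].
move: E => /[swap] -> ; lia.
Qed.

Lemma intPN (x : int) : exists a b : nat, x = a%:Z - b%:Z.
Proof.
case: x => [a|b]; first by exists a, 0%N; rewrite subr0.
by exists 0%N, b.+1; rewrite NegzE sub0r.
Qed.

Lemma toZ_add x y : toZ (x + y) = (toZ x + toZ y)%ZZ.
Proof.
have [a [b ->]] := intPN x; have [c [d ->]] := intPN y.
have -> : a%:Z - b%:Z + (c%:Z - d%:Z) = (a + c)%N%:Z - (b + d)%N%:Z.
  by rewrite !PoszD opprD addrACA.
rewrite !toZ_subnat Nat2Z.inj_add Nat2Z.inj_add; lia.
Qed.

Lemma toZ_opp x : toZ (- x) = (- toZ x)%ZZ.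
Proof.
have [a [b ->]] := intPN x; rewrite opprB !toZ_subnat; lia.
Qed.

Lemma toZ_sub x y : toZ (x - y) = (toZ x - toZ y)%ZZ.
Proof. by rewrite toZ_add toZ_opp. Qed.

Lemma toZ_mul x y : toZ (x * y) = (toZ x * toZ y)%ZZ.
Proof.
have [a [b ->]] := intPN x; have [c [d ->]] := intPN y.
rewrite mulrBl !mulrBr -!PoszM !toZ_sub !toZ_nat !Nat2Z.inj_mul; ring.
Qed.

Lemma toZ_inj x y : toZ x = toZ y -> x = y.
Proof. case: x => [a|a]; case: y => [b|b] /=; move=> h; f_equal; lia. Qed.

Lemma toZ_ge0 x : (0 <= x) <-> (0 <= toZ x)%ZZ.
Proof. case: x => [a|a] /=; split => //; lia. Qed.

Lemma toZ_le x y : (x <= y) <-> (toZ x <= toZ y)%ZZ.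
Proof.
rewrite -subr_ge0 toZ_ge0 toZ_sub; lia.
Qed.

Lemma toZ_lt x y : (x < y) <-> (toZ x < toZ y)%ZZ.
Proof.
rewrite ltNge; split.
  move/negP=> h; case: (Z.lt_ge_cases (toZ x) (toZ y)) => // h2.
  by exfalso; apply: h; apply/toZ_le.
move=> h; apply/negP => /toZ_le; lia.
Qed.

Definition ofZ (z : Z) : int :=
  if (0 <=? z)%ZZ then Posz (Z.to_nat z) else Negz (Z.to_nat (- z - 1)).

Lemma toZ_ofZ z : toZ (ofZ z) = z.
Proof.
rewrite /ofZ; case: (Z.leb_spec 0 z) => h /=; lia.
Qed.

Lemma toZ_dvd (d m : int) : (d %| m)%Z <-> exists z, toZ m = (z * toZ d)%ZZ.
Proof.
split.
  move/dvdzP => [x ->]; exists (toZ x); by rewrite toZ_mul.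
move=> [z h]; apply/dvdzP; exists (ofZ z); apply: toZ_inj.
by rewrite toZ_mul toZ_ofZ.
Qed.

Definition cf (P : {poly int}) (m : int) : int := if m < 0 then 0 else P`_(absz m).
Definition sh (s : nat) (X : int -> int) (m : int) : int := X m - X (m - s%:Z).

Lemma cf_sh P s m : cf ((1 - 'X^s) * P) m = sh s (cf P) m.
Proof.
rewrite /cf /sh; case: m => [i|i] /=; last first.
  have -> : Negz i - s%:Z < 0.
    by apply/toZ_lt; rewrite toZ_sub toZ0 /=; lia.
  by rewrite subrr.
rewrite mulrBl mul1r coefB coefXnM.
case: (ltnP i s) => h.
  have -> : i%:Z - s%:Z < 0 by apply/toZ_lt; rewrite toZ_sub toZ0 /=; move/ssrnat.ltP: h; lia.
  by rewrite subr0.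
by rewrite subzn.
Qed.

Lemma cf_shf P s : cf ((1 - 'X^s) * P) = sh s (cf P).
Proof. apply: functional_extensionality => m; exact: cf_sh. Qed.

Lemma shC s t X : sh s (sh t X) = sh t (sh s X).
Proof.
apply: functional_extensionality => m; rewrite /sh.
apply: toZ_inj; rewrite !(toZ_add, toZ_opp); have -> : m - s%:Z - t%:Z = m - t%:Z - s%:Z.
  by apply: toZ_inj; rewrite !(toZ_add, toZ_opp); lia.
lia.
Qed.

Lemma shC3 a b c d e f X :
  sh a (sh b (sh c (sh d (sh e (sh f X))))) =
  sh d (sh e (sh f (sh a (sh b (sh c X))))).
Proof.
rewrite (shC c d) (shC b d) (shC a d) (shC c e) (shC b e) (shC a e).
by rewrite (shC c f) (shC b f) (shC a f).
Qed.

Lemma sh_loc s X Y M : (forall m, m <= M -> X m = Y m) ->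
  forall m, m <= M -> sh s X m = sh s Y m.
Proof.
move=> h m hm; rewrite /sh !h //.
apply: le_trans hm; rewrite lerBlDr lerDl //.
Qed.

Lemma sh_neg s X : (forall m, m < 0 -> X m = 0) -> forall m, m < 0 -> sh s X m = 0.
Proof.
move=> h m hm; rewrite /sh !h ?subrr //.
apply: le_lt_trans hm; rewrite lerBlDr lerDl //.
Qed.

Definition delta (m : int) : int := if m == 0 then 1 else 0.

Lemma cf1 : cf 1 = delta.
Proof.
apply: functional_extensionality => m; rewrite /cf /delta coef1.
case: m => [i|i] //=.
by case: i.
Qed.

Lemma cf_neg P m : m < 0 -> cf P m = 0.
Proof. by rewrite /cf => ->. Qed.

Local Open Scope nat_scope.
Lemma divisors_mul m s : (0 < m)%N -> prime s -> ~~ (s %| m)%N ->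
  perm_eq (divisors (m * s)%N) (divisors m ++ [seq (d * s)%N | d <- divisors m]).
Proof.
move=> m0 sP ndvd.
have s0 := prime_gt0 sP.
have ms0 : (0 < m * s)%N by rewrite muln_gt0 m0 s0.
apply: uniq_perm; first exact: divisors_uniq.
  rewrite cat_uniq divisors_uniq (map_inj_uniq) ?divisors_uniq ?andbT; last first.
    by move=> x y /eqP; rewrite eqn_pmul2r // => /eqP.
  apply/hasPn => x /mapP [d hd ->]; apply/negP => h.
  rewrite /= -dvdn_divisors // in h.
  by move: (dvdn_trans (dvdn_mull d (dvdnn s)) h); rewrite (negbTE ndvd).
move=> x; rewrite mem_cat -!dvdn_divisors //.
apply/idP/idP.
  case: (boolP (s %| x)%N) => sx hx.
    apply/orP; right; apply/mapP; exists (x %/ s); last by rewrite divnK.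
    rewrite -dvdn_divisors //.
    by rewrite -(dvdn_pmul2r s0) divnK.
  have cx : coprime x s by rewrite coprime_sym prime_coprime.
  by apply/orP; left; rewrite -(@Gauss_dvdl x m s cx).
case/orP.
  by move=> h; apply: dvdn_mulr.
case/mapP=> d hd ->; rewrite -dvdn_divisors // in hd.
by rewrite dvdn_pmul2r.
Qed.

Local Open Scope ring_scope.
Lemma big_div_mul (R : comNzRingType) (g : nat -> R) m s :
  (0 < m)%N -> prime s -> ~~ (s %| m)%N ->
  \prod_(d <- divisors (m * s)%N) g d =
  \prod_(d <- divisors m) g d * \prod_(d <- divisors m) g (d * s)%N.
Proof.
move=> m0 sP nd; rewrite (perm_big _ (@divisors_mul m s m0 sP nd)) big_cat big_map //.
Qed.

Lemma big_div_prime (R : comNzRingType) (g : nat -> R) s : prime s ->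
  \prod_(d <- divisors s) g d = g 1%N * g s.
Proof.
move=> sP; rewrite -[s]mul1n big_div_mul // ?dvdn1 -?eqn_leq; last first.
  by apply/negP => /eqP h; move: sP; rewrite h.
by rewrite /= !big_seq1 mul1n.
Qed.

Definition zb (e : nat) : int := if e == 0%N then 1 else 0.

Lemma cnt e : (e <= 2)%N ->
  (Z.of_nat (e == 0%N) + Z.of_nat (e == 1%N) + Z.of_nat (e == 2%N) = 1)%ZZ /\
  (Z.of_nat (e == 1%N) + 2 * Z.of_nat (e == 2%N) = Z.of_nat e)%ZZ.
Proof. by case: e => [|[|[|e]]]. Qed.

Lemma toZ_zb e : toZ (zb e) = Z.of_nat (e == 0%N).
Proof. by rewrite /zb; case: (e == 0%N). Qed.

Lemma finish (e1 e2 e3 e4 f1 f2 f3 f4 : nat) (Dz : int) :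
  (e1 <= 2)%N -> (e2 <= 2)%N -> (e3 <= 2)%N -> (e4 <= 2)%N ->
  (f1 <= 2)%N -> (f2 <= 2)%N -> (f3 <= 2)%N -> (f4 <= 2)%N ->
  (e1 + e2 + e3 + e4 = f1 + f2 + f3 + f4)%N ->
  Dz = zb e1 - zb f3 - (zb f2 - zb e3) - (zb f1 - zb e4 - (zb e2 - zb f4)) ->
  let Splus := [:: e1%:R; e2%:R; e3%:R; e4%:R] : seq rat in
  let Sminus := [:: f1%:R; f2%:R; f3%:R; f4%:R] : seq rat in
  [/\ Dz%:~R = ((Ncount 1 Sminus)%:R - (Ncount 1 Splus)%:R) / 2 :> rat,
      Dz%:~R = (Ncount 0 Splus)%:R - (Ncount 0 Sminus)%:R :> rat
    & Dz%:~R = (Ncount 2 Splus)%:R - (Ncount 2 Sminus)%:R :> rat].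
Proof.
move=> /cnt [a1 b1] /cnt [a2 b2] /cnt [a3 b3] /cnt [a4 b4].
move=> /cnt [c1 d1] /cnt [c2 d2] /cnt [c3 d3] /cnt [c4 d4] hs hD Splus Sminus.
move/(congr1 Z.of_nat): hs; rewrite !Nat2Z.inj_add => hs.
move/(congr1 toZ): hD; rewrite !(toZ_add, toZ_opp, toZ_zb) => hD.
rewrite /Splus /Sminus /Ncount /= !eqr_nat.
have conv : forall (A B : nat) (z : int), toZ z = (Z.of_nat A - Z.of_nat B)%ZZ ->
    z%:~R = A%:R - B%:R :> rat.
  move=> A B z hz; rewrite !pmulrn -intrB; congr (_%:~R).
  by apply: toZ_inj; rewrite toZ_sub !toZ_nat.
split.
- rewrite -(conv _ _ (2 * Dz)); last first.
    rewrite toZ_mul toZ2 !Nat2Z.inj_add; zl.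
  by rewrite intrM (_ : (2%:~R : rat) = 2) // mulrAC divff ?mul1r.
- apply: conv; rewrite !Nat2Z.inj_add; zl.
- apply: conv; rewrite !Nat2Z.inj_add; zl.
Qed.

Set Implicit Arguments.
Section Main.
Variables p q r : nat.
Hypotheses (pP : prime p) (qP : prime q) (rP : prime r)
  (npq : p != q) (nqr : q != r) (nrp : r != p).


Local Notation N := (p * q * r)%N.
Definition Xv (a b c : nat) : nat := (a * (q * r) + b * (r * p) + c * (p * q))%N.

Lemma p_gt0 : (0 < p)%N. Proof. exact: prime_gt0. Qed.
Lemma q_gt0 : (0 < q)%N. Proof. exact: prime_gt0. Qed.
Lemma r_gt0 : (0 < r)%N. Proof. exact: prime_gt0. Qed.
Lemma N_gt0 : (0 < N)%N. Proof. by rewrite !muln_gt0 p_gt0 q_gt0 r_gt0. Qed.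

Lemma cop (s t u : nat) : prime s -> prime t -> prime u -> s != t -> s != u ->
  coprime s (t * u).
Proof.
move=> sP tP uP st su; rewrite coprimeMr !prime_coprime // !dvdn_prime2 //.
by rewrite st su.
Qed.

Lemma coord s u a a' (x : int) (w : Z) : prime s -> coprime s u ->
  (a < s)%N -> (a' < s)%N -> (s%:Z %| x)%Z ->
  toZ x = ((Z.of_nat a - Z.of_nat a') * Z.of_nat u + Z.of_nat s * w)%ZZ ->
  a = a'.
Proof.
move=> sP csu ha ha' /toZ_dvd [z hz] hx.
have : (s%:Z %| (a%:Z - a'%:Z) * u%:Z)%Z.
  apply/toZ_dvd; exists (z - w)%ZZ.
  rewrite toZ_mul toZ_sub !toZ_nat; rewrite !toZ_nat in hz; nia.
rewrite Gauss_dvdzl; last by rewrite coprimezE.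
move/toZ_dvd=> [z' hz']; rewrite toZ_sub !toZ_nat in hz'.
move/ssrnat.ltP: ha => ha; move/ssrnat.ltP: ha' => ha'.
apply: Nat2Z.inj.
case: (Z.lt_total z' 0) => [h|[h|h]]; nia.
Qed.

Definition Pt (k : int) (a b c : nat) (e : int) :=
  [/\ (a < p)%N, (b < q)%N, (c < r)%N & (Xv a b c)%:Z - k = e * N%:Z].

Lemma cpqr : coprime p (q * r). Proof. by apply: cop => //; rewrite eq_sym. Qed.
Lemma cqrp : coprime q (r * p). Proof. by apply: cop => //; rewrite eq_sym. Qed.
Lemma crpq : coprime r (p * q). Proof. by apply: cop => //; rewrite eq_sym. Qed.

Lemma coordA k a b c e k' a' b' c' e' : Pt k a b c e -> Pt k' a' b' c' e' ->
  (p%:Z %| k - k')%Z -> a = a'.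
Proof.
move=> [ha hb hc he] [ha' hb' hc' he'] /toZ_dvd [z hz].
apply: (@coord p (q * r) a a' ((Xv a b c)%:Z - (Xv a' b' c')%:Z)
   ((Z.of_nat b - Z.of_nat b') * Z.of_nat r + (Z.of_nat c - Z.of_nat c') * Z.of_nat q)%ZZ) => //.
- exact: cpqr.
- apply/toZ_dvd; exists (z + (toZ e - toZ e') * Z.of_nat q * Z.of_nat r)%ZZ.
  move: he he' => /(congr1 toZ) he /(congr1 toZ) he'.
  rewrite !toZ_sub !toZ_mul !toZ_nat /Xv !Nat2Z.inj_add !Nat2Z.inj_mul in he he' *.
  rewrite toZ_sub !toZ_nat in hz; nia.
- rewrite toZ_sub !toZ_nat /Xv !Nat2Z.inj_add !Nat2Z.inj_mul; ring.
Qed.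

Lemma coordB k a b c e k' a' b' c' e' : Pt k a b c e -> Pt k' a' b' c' e' ->
  (q%:Z %| k - k')%Z -> b = b'.
Proof.
move=> [ha hb hc he] [ha' hb' hc' he'] /toZ_dvd [z hz].
apply: (@coord q (r * p) b b' ((Xv a b c)%:Z - (Xv a' b' c')%:Z)
   ((Z.of_nat a - Z.of_nat a') * Z.of_nat r + (Z.of_nat c - Z.of_nat c') * Z.of_nat p)%ZZ) => //.
- exact: cqrp.
- apply/toZ_dvd; exists (z + (toZ e - toZ e') * Z.of_nat p * Z.of_nat r)%ZZ.
  move: he he' => /(congr1 toZ) he /(congr1 toZ) he'.
  rewrite !toZ_sub !toZ_mul !toZ_nat /Xv !Nat2Z.inj_add !Nat2Z.inj_mul in he he' *.
  rewrite toZ_sub !toZ_nat in hz; nia.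
- rewrite toZ_sub !toZ_nat /Xv !Nat2Z.inj_add !Nat2Z.inj_mul; ring.
Qed.

Lemma coordC k a b c e k' a' b' c' e' : Pt k a b c e -> Pt k' a' b' c' e' ->
  (r%:Z %| k - k')%Z -> c = c'.
Proof.
move=> [ha hb hc he] [ha' hb' hc' he'] /toZ_dvd [z hz].
apply: (@coord r (p * q) c c' ((Xv a b c)%:Z - (Xv a' b' c')%:Z)
   ((Z.of_nat a - Z.of_nat a') * Z.of_nat q + (Z.of_nat b - Z.of_nat b') * Z.of_nat p)%ZZ) => //.
- exact: crpq.
- apply/toZ_dvd; exists (z + (toZ e - toZ e') * Z.of_nat p * Z.of_nat q)%ZZ.
  move: he he' => /(congr1 toZ) he /(congr1 toZ) he'.
  rewrite !toZ_sub !toZ_mul !toZ_nat /Xv !Nat2Z.inj_add !Nat2Z.inj_mul in he he' *.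
  rewrite toZ_sub !toZ_nat in hz; nia.
- rewrite toZ_sub !toZ_nat /Xv !Nat2Z.inj_add !Nat2Z.inj_mul; ring.
Qed.

Lemma Pt_uniq k a b c e a' b' c' e' : Pt k a b c e -> Pt k a' b' c' e' ->
  [/\ a = a', b = b', c = c' & e = e'].
Proof.
move=> h h'.
have d0 : forall s : nat, (s%:Z %| k - k)%Z by move=> s; rewrite subrr dvdz0.
have ea := coordA h h' (d0 p); have eb := coordB h h' (d0 q).
have ec := coordC h h' (d0 r).
split=> //; subst a' b' c'; case: h h' => _ _ _ he [_ _ _ he'].
move: he'; rewrite he => /eqP; rewrite (inj_eq (mulIf _)) ?(eqP) //.
  by move/eqP.
by rewrite eqz_nat -lt0n N_gt0.
Qed.

Definition gt (t : 'I_p * 'I_q * 'I_r) : 'I_N :=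
  Ordinal (ltn_pmod (Xv t.1.1 t.1.2 t.2) N_gt0).

Lemma Pt_mod a b c : (a < p)%N -> (b < q)%N -> (c < r)%N ->
  Pt ((Xv a b c %% N)%N)%:Z a b c ((Xv a b c %/ N)%N)%:Z.
Proof.
move=> ha hb hc; split=> //.
rewrite {1}(divn_eq (Xv a b c) N) PoszD PoszM addrK //.
Qed.

Lemma gt_inj : injective gt.
Proof.
move=> [[a b] c] [[a' b'] c'] /(congr1 val) /= h.
have h1 := @Pt_mod a b c (ltn_ord a) (ltn_ord b) (ltn_ord c).
have h2 := @Pt_mod a' b' c' (ltn_ord a') (ltn_ord b') (ltn_ord c').
rewrite h in h1.
have [ea eb ec _] := Pt_uniq h1 h2.
by rewrite (ord_inj ea) (ord_inj eb) (ord_inj ec).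
Qed.

Lemma exPt k : exists a b c e, Pt k a b c e.
Proof.
have Nz : (N%:Z != 0) by rewrite eqz_nat -lt0n N_gt0.
have m0 : 0 <= (k %% N%:Z)%Z by apply: modz_ge0.
have mN : (`|(k %% N%:Z)%Z| < N)%N.
  by rewrite -ltz_nat gez0_abs // ltz_pmod // ltz_nat N_gt0.
have : Ordinal mN \in codom gt.
  apply: inj_card_onto; first exact: gt_inj.
  by rewrite !card_prod !card_ord.
move/codomP=> [[[a b] c] /(congr1 val) /= hm].
exists a, b, c, ((Xv a b c %/ N)%N%:Z - (k %/ N%:Z)%Z).
split=> //.
have := divz_eq k N%:Z; rewrite -(gez0_abs m0) hm => hk.
rewrite {1}(divn_eq (Xv a b c) N) PoszD PoszM.
move/(congr1 toZ): hk; rewrite !(toZ_add, toZ_opp, toZ_mul) => hk.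
apply: toZ_inj; rewrite !(toZ_add, toZ_opp, toZ_mul); nia.
Qed.

Lemma Fform a b c k e : (Xv a b c)%:Z - k = e * N%:Z ->
  a%:R / p%:R + b%:R / q%:R + c%:R / r%:R - k%:~R / (N%:R) = e%:~R :> rat.
Proof.
move=> he.
have Nz : (N%:R != 0 :> rat) by rewrite pnatr_eq0 -lt0n N_gt0.
have key : forall (x s u : nat), N = (s * u)%N -> x%:R / s%:R * N%:R = (x * u)%:R :> rat.
  move=> x s u hN.
  have s0 : (s%:R != 0 :> rat).
    by rewrite pnatr_eq0; apply/eqP => s0; move: N_gt0; rewrite hN s0.
  by rewrite hN natrM mulrA divfK // natrM.
apply: (mulIf Nz).
rewrite mulrBl !mulrDl divfK //.
rewrite (key a p (q * r)%N) ?mulnA //.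
rewrite (key b q (r * p)%N); last by rewrite -!multE; lia.
rewrite (key c r (p * q)%N); last by rewrite -!multE; lia.
have -> : (N%:R : rat) = (N%:Z)%:~R by rewrite pmulrn.
rewrite -intrM -he intrB -!pmulrn natrD natrD /Xv.
by rewrite [(a * (q * r))%N]mulnA.
Qed.


Lemma pred_Pt k (t : 'I_p * 'I_q * 'I_r) : abc_pred p q r k t ->
  exists e, Pt k t.1.1 t.1.2 t.2 e.
Proof.
rewrite /abc_pred /= => /toZ_dvd [z hz].
exists (ofZ (- z)%ZZ); split=> //.
apply: toZ_inj; rewrite toZ_mul toZ_ofZ toZ_sub; rewrite toZ_sub in hz.
rewrite /Xv; lia.
Qed.

Lemma F_of k a b c e : Pt k a b c e -> F p q r k = e%:~R.
Proof.
move=> h; rewrite /F /abc; case: pickP => [[[a0 b0] c0] /= H | H].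
  have [e0 h0] := @pred_Pt _ _ H.
  have [ea eb ec ee] := Pt_uniq h0 h; rewrite /= in ea eb ec.
  rewrite ea eb ec; apply: Fform; by case: h.
exfalso; case: h => ha hb hc he.
move: (H (Ordinal ha, Ordinal hb, Ordinal hc)); rewrite /abc_pred /=.
have -> : (Posz (p * q * r) %| k - Posz (a * (q * r) + b * (r * p) + c * (p * q)))%Z.
  apply/toZ_dvd; exists (- toZ e)%ZZ; move/(congr1 toZ): he.
  rewrite !(toZ_add, toZ_opp, toZ_mul) /Xv; lia.
by [].
Qed.

Lemma Zpred s : (0 < s)%N -> Z.of_nat s.-1 = (Z.of_nat s - 1)%ZZ.
Proof. case: s => // s _; change (s.+1.-1) with s; rewrite Nat2Z.inj_succ; lia. Qed.

Definition dec (s c : nat) := if c == 0%N then s.-1 else c.-1.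

Lemma stepA k a b c e : Pt k a b c e ->
  Pt (k - (q * r)%N%:Z) (dec p a) b c (e + (a == 0%N)%N%:Z).
Proof.
case=> ha hb hc he; split=> //.
  by rewrite /dec; case: a ha {he} => [|a] ha /=; [rewrite prednK ?p_gt0 | apply: ltnW].
move/(congr1 toZ): he => he; apply: toZ_inj.
rewrite !(toZ_add, toZ_opp, toZ_mul) /Xv /dec in he *.
case: a ha he => [|a] ha /= he.
  rewrite !Nat2Z.inj_add !Nat2Z.inj_mul in he *; rewrite (Zpred p p_gt0); zl.
rewrite !Nat2Z.inj_add !Nat2Z.inj_mul in he *; rewrite ?Nat2Z.inj_succ in he *; zl.
Qed.

Lemma stepB k a b c e : Pt k a b c e ->
  Pt (k - (r * p)%N%:Z) a (dec q b) c (e + (b == 0%N)%N%:Z).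
Proof.
case=> ha hb hc he; split=> //.
  by rewrite /dec; case: b hb {he} => [|b] hb /=; [rewrite prednK ?q_gt0 | apply: ltnW].
move/(congr1 toZ): he => he; apply: toZ_inj.
rewrite !(toZ_add, toZ_opp, toZ_mul) /Xv /dec in he *.
case: b hb he => [|b] hb /= he.
  rewrite !Nat2Z.inj_add !Nat2Z.inj_mul in he *; rewrite (Zpred q q_gt0); zl.
rewrite !Nat2Z.inj_add !Nat2Z.inj_mul in he *; rewrite ?Nat2Z.inj_succ in he *; zl.
Qed.

Lemma stepC k a b c e : Pt k a b c e ->
  Pt (k - (p * q)%N%:Z) a b (dec r c) (e + (c == 0%N)%N%:Z).
Proof.
case=> ha hb hc he; split=> //.
  by rewrite /dec; case: c hc {he} => [|c] hc /=; [rewrite prednK ?r_gt0 | apply: ltnW].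
move/(congr1 toZ): he => he; apply: toZ_inj.
rewrite !(toZ_add, toZ_opp, toZ_mul) /Xv /dec in he *.
case: c hc he => [|c] hc /= he.
  rewrite !Nat2Z.inj_add !Nat2Z.inj_mul in he *; rewrite (Zpred r r_gt0); zl.
rewrite !Nat2Z.inj_add !Nat2Z.inj_mul in he *; rewrite ?Nat2Z.inj_succ in he *; zl.
Qed.

Lemma Pt_bounds k a b c e : Pt k a b c e ->
  [/\ (k < N%:Z -> 0 <= e), (k < 0 -> 0 < e) &
      (- (p + q + r)%N%:Z < k -> e <= 2)].
Proof.
case=> ha hb hc he.
have h1 : (a.+1 * (q * r) <= p * (q * r))%N by rewrite leq_mul2r ha orbT.
have h2 : (b.+1 * (r * p) <= q * (r * p))%N by rewrite leq_mul2r hb orbT.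
have h3 : (c.+1 * (p * q) <= r * (p * q))%N by rewrite leq_mul2r hc orbT.
have h4 : (p + q + r <= q * r + r * p + p * q)%N.
  have := prime_gt0 pP; have := prime_gt0 qP; have := prime_gt0 rP.
  move=> /ssrnat.leP ? /ssrnat.leP ? /ssrnat.leP ?; apply/ssrnat.leP.
  rewrite -!plusE -!multE; nia.
have N0 := N_gt0.
move/ssrnat.leP: h1; move/ssrnat.leP: h2; move/ssrnat.leP: h3; move/ssrnat.leP: h4.
move/ssrnat.leP: N0.
rewrite -!plusE -!multE => N0 h4 h3 h2 h1.
apply Nat2Z.inj_le in h1; apply Nat2Z.inj_le in h2; apply Nat2Z.inj_le in h3.
apply Nat2Z.inj_le in h4; apply Nat2Z.inj_lt in N0.
have hX := Nat2Z.is_nonneg (Xv a b c); rewrite /Xv -!plusE -!multE ?Nat2Z.inj_add ?Nat2Z.inj_mul in hX.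
move/(congr1 toZ): he; rewrite !(toZ_add, toZ_opp, toZ_mul, toZ_nat) /Xv.
rewrite ?Nat2Z.inj_add ?Nat2Z.inj_mul ?Nat2Z.inj_succ in h1 h2 h3 h4 N0.
rewrite ?Nat2Z.inj_add ?Nat2Z.inj_mul => he.
split.
- move/toZ_lt; rewrite toZ_nat !Nat2Z.inj_mul => hk; apply/toZ_le.
  case: (Z.lt_ge_cases (toZ e) 0) => // hlt; exfalso.
  have : (toZ e * (Z.of_nat p * Z.of_nat q * Z.of_nat r) <= - (Z.of_nat p * Z.of_nat q * Z.of_nat r))%ZZ by clean; nia.
  clean; nia.
- move/toZ_lt; rewrite toZ0 => hk; apply/toZ_lt; rewrite toZ0.
  case: (Z.lt_ge_cases 0 (toZ e)) => // hlt; exfalso.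
  have : (toZ e * (Z.of_nat p * Z.of_nat q * Z.of_nat r) <= 0)%ZZ by clean; nia.
  clean; nia.
- move/toZ_lt; rewrite toZ_opp toZ_nat !Nat2Z.inj_add => hk; apply/toZ_le; rewrite toZ2.
  case: (Z.lt_ge_cases 2 (toZ e)) => // hlt; exfalso.
  have : (3 * (Z.of_nat p * Z.of_nat q * Z.of_nat r) <= toZ e * (Z.of_nat p * Z.of_nat q * Z.of_nat r))%ZZ by clean; nia.
  clean; nia.
Qed.


Lemma ndvd s t : prime s -> prime t -> s != t -> ~~ (t %| s)%N.
Proof. by move=> sP tP st; rewrite dvdn_prime2 // eq_sym. Qed.

Lemma big_div2 (R : comNzRingType) (g : nat -> R) s t :
  prime s -> prime t -> s != t ->
  \prod_(d <- divisors (s * t)%N) g d = (g 1%N * g s) * (g t * g (s * t)%N).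
Proof.
move=> sP tP st; rewrite big_div_mul ?prime_gt0 ?ndvd //.
by rewrite !big_div_prime // mul1n.
Qed.

Lemma U_prime s : prime s -> 'X^s - 1 = 'Phi_1 * 'Phi_s :> {poly int}.
Proof. by move=> sP; rewrite -prod_Cyclotomic ?prime_gt0 // big_div_prime. Qed.

Lemma U_two s t : prime s -> prime t -> s != t ->
  'X^(s * t)%N - 1 = ('Phi_1 * 'Phi_s) * ('Phi_t * 'Phi_(s * t)%N) :> {poly int}.
Proof.
move=> sP tP st; rewrite -prod_Cyclotomic ?muln_gt0 ?prime_gt0 //.
exact: big_div2.
Qed.

Lemma U_three : 'X^(p * q * r)%N - 1 =
  (('Phi_1 * 'Phi_p) * ('Phi_q * 'Phi_(p * q)%N)) *
  (('Phi_r * 'Phi_(r * p)%N) * ('Phi_(q * r)%N * 'Phi_(p * q * r)%N)) :> {poly int}.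
Proof.
rewrite -prod_Cyclotomic ?muln_gt0 ?prime_gt0 //.
have nd : ~~ (r %| p * q)%N.
  by rewrite Euclid_dvdM // negb_or !ndvd // eq_sym.
rewrite big_div_mul ?muln_gt0 ?prime_gt0 //.
by rewrite !big_div2 // !mul1n [(p * r)%N]mulnC.
Qed.


Lemma ac8 (R : comNzRingType) (x : nat -> R) :
 x 0%N * x 1%N * (x 2%N * x 4%N) * (x 0%N * x 2%N * (x 3%N * x 5%N) *
   (x 0%N * x 3%N * (x 1%N * x 6%N) * (x 0%N * x 7%N))) =
 x 0%N * x 1%N * (x 2%N * x 4%N) * (x 3%N * x 6%N * (x 5%N * x 7%N)) *
   (x 0%N * x 1%N * (x 0%N * x 2%N * (x 0%N * x 3%N))).
Proof.
transitivity (\prod_(i <- [:: 0;1;2;4;0;2;3;5;0;3;1;6;0;7]%N) x i).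
  by rewrite unlock /= mulr1 -!mulrA.
rewrite (perm_big [:: 0;1;2;4;3;6;5;7;0;1;0;2;0;3]%N) //.
by rewrite unlock /= mulr1 -!mulrA.
Qed.

Lemma Phi1 : 'X - 1 = 'Phi_1 :> {poly int}.
Proof. rewrite -['X]expr1 -prod_Cyclotomic //. have -> : divisors 1 = [:: 1%N] by []. by rewrite big_seq1. Qed.

Lemma polyid :
  (1 - 'X^(p * q)%N) * ((1 - 'X^(q * r)%N) * ((1 - 'X^(r * p)%N) * ((1 - 'X) * 'Phi_(p * q * r)%N)))
  = (1 - 'X^(p * q * r)%N) * ((1 - 'X^p) * ((1 - 'X^q) * ((1 - 'X^r) * 1))) :> {poly int}.
Proof.
rewrite -!(opprB _ 1) !(mulrN, mulNr) !opprK mulr1.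
rewrite U_two // U_two // U_two // U_three !U_prime // Phi1.
have := (@ac8 _ (fun i => nth 1 [:: 'Phi_1; 'Phi_p; 'Phi_q; 'Phi_r; 'Phi_(p * q)%N;
  'Phi_(q * r)%N; 'Phi_(r * p)%N; 'Phi_(p * q * r)%N] i)).
by rewrite /= => ->.
Qed.

Definition Qop X := sh (p * q)%N (sh (q * r)%N (sh (r * p)%N X)).
Definition Pop X := sh p (sh q (sh r X)).

Lemma QC : Qop (cf ((1 - 'X) * 'Phi_(p * q * r)%N)) = sh (p * q * r)%N (Pop delta).
Proof. by rewrite /Qop /Pop -cf1 -!cf_shf polyid. Qed.

Lemma QP X : Qop (Pop X) = Pop (Qop X).
Proof. exact: shC3. Qed.

Lemma Q_loc X Y M : (forall m, m <= M -> X m = Y m) ->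
  forall m, m <= M -> Qop X m = Qop Y m.
Proof. by move=> h; do 3!apply: sh_loc. Qed.

Lemma P_loc X Y M : (forall m, m <= M -> X m = Y m) ->
  forall m, m <= M -> Pop X m = Pop Y m.
Proof. by move=> h; do 3!apply: sh_loc. Qed.

Lemma P_neg X : (forall m, m < 0 -> X m = 0) -> forall m, m < 0 -> Pop X m = 0.
Proof. by move=> h; do 3!apply: sh_neg. Qed.

Definition rest (X : int -> int) m :=
  X (m - (r * p)%N%:Z) + X (m - (q * r)%N%:Z) - X (m - (q * r)%N%:Z - (r * p)%N%:Z)
  + (X (m - (p * q)%N%:Z) - X (m - (p * q)%N%:Z - (r * p)%N%:Z)
     - (X (m - (p * q)%N%:Z - (q * r)%N%:Z)
        - X (m - (p * q)%N%:Z - (q * r)%N%:Z - (r * p)%N%:Z))).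

Lemma Qop_rest X m : X m = Qop X m + rest X m.
Proof.
rewrite /Qop /sh /rest.
set s1 := m - (r * p)%N%:Z; set s2 := m - (q * r)%N%:Z; set s3 := s2 - (r * p)%N%:Z.
set s4 := m - (p * q)%N%:Z; set s5 := s4 - (r * p)%N%:Z; set s6 := s4 - (q * r)%N%:Z.
set s7 := s6 - (r * p)%N%:Z.
apply: toZ_inj; rewrite !(toZ_add, toZ_opp); zl.
Qed.

Lemma Q_uniq X Y M : (forall m, m < 0 -> X m = 0) -> (forall m, m < 0 -> Y m = 0) ->
  (forall m, m < M -> Qop X m = Qop Y m) -> forall m, m < M -> X m = Y m.
Proof.
move=> hX hY hQ.
have g1 : forall s t : nat, prime s -> prime t -> (1 <= Z.of_nat (s * t)%N)%ZZ.
  move=> s t sP tP; rewrite Nat2Z.inj_mul.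
  have := prime_gt0 sP; have := prime_gt0 tP => /ssrnat.ltP ? /ssrnat.ltP ?; zl.
have hpq := g1 p q pP qP; have hqr := g1 q r qP rP; have hrp := g1 r p rP pP.
suff : forall i : nat, forall m, m < i%:Z -> m < M -> X m = Y m.
  move=> h m hm; case: (boolP (m < 0)) => hm0; first by rewrite hX ?hY.
  case: m hm hm0 => [i|//] hm _; apply: (h i.+1) => //.
  by rewrite ltz_nat.
elim=> [|i IH] m hm hmM.
  by rewrite hX ?hY.
have E : forall t, t <= m - 1 -> X t = Y t.
  move=> t ht; apply: IH.
    by apply/toZ_lt; move/toZ_le: ht; move/toZ_lt: hm; rewrite !(toZ_add, toZ_opp) /=; zl.
  by apply/toZ_lt; move/toZ_le: ht; move/toZ_lt: hmM; rewrite !(toZ_add, toZ_opp) /=; zl.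
rewrite (Qop_rest X) (Qop_rest Y) hQ //; congr (_ + _).
rewrite /rest !E //; apply/toZ_le; rewrite !(toZ_add, toZ_opp, toZ_nat) /=; zl.
Qed.



Definition Zf (k : int) : int := if F p q r k == 0 then 1 else 0.

Lemma Zf_of k a b c n : Pt k a b c n%:Z -> Zf k = if n == 0%N then 1 else 0.
Proof. by move=> h; rewrite /Zf (F_of h) -pmulrn pnatr_eq0. Qed.

Lemma stepA' k a b c n : Pt k a b c n%:Z ->
  Pt (k - (q * r)%N%:Z) (dec p a) b c (n + (a == 0%N))%N%:Z.
Proof. by move=> h; rewrite PoszD; apply: stepA. Qed.
Lemma stepB' k a b c n : Pt k a b c n%:Z ->
  Pt (k - (r * p)%N%:Z) a (dec q b) c (n + (b == 0%N))%N%:Z.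
Proof. by move=> h; rewrite PoszD; apply: stepB. Qed.
Lemma stepC' k a b c n : Pt k a b c n%:Z ->
  Pt (k - (p * q)%N%:Z) a b (dec r c) (n + (c == 0%N))%N%:Z.
Proof. by move=> h; rewrite PoszD; apply: stepC. Qed.

Lemma Zf_neg m : m < 0 -> Zf m = 0.
Proof.
move=> hm; have [a [b [c [e h]]]] := exPt m.
have [_ h2 _] := Pt_bounds h; have he := h2 hm; clear h2.
case: e he h => [[|n]|n] // _ h.
by rewrite (Zf_of h).
Qed.

Lemma Qneg X : (forall m, m < 0 -> X m = 0) -> forall m, m < 0 -> Qop X m = 0.
Proof. by move=> h; do 3!apply: sh_neg. Qed.

Lemma QZ m : m < (p * q * r)%N%:Z -> Qop Zf m = delta m.
Proof.
move=> hmN.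
case: (boolP (m < 0)) => hm0.
  rewrite Qneg //; first by rewrite /delta (negbTE (ltr0_neq0 hm0)).
  exact: Zf_neg.
have [a [b [c [e h]]]] := exPt m.
have [h1 _ _] := Pt_bounds h; have he := h1 hmN; clear h1.
case: e he h => [n|//] _ h.
rewrite /Qop /sh.
rewrite (Zf_of h) (Zf_of (stepB' h)) (Zf_of (stepA' h)) (Zf_of (stepB' (stepA' h))).
rewrite (Zf_of (stepC' h)) (Zf_of (stepB' (stepC' h))) (Zf_of (stepA' (stepC' h))).
rewrite (Zf_of (stepB' (stepA' (stepC' h)))).
rewrite /dec.
case: (boolP (m == 0)) => hm.
  rewrite /delta hm; move/eqP: hm => hm; subst m.
  have h0 : Pt 0 0 0 0 0.
    split; rewrite ?prime_gt0 //; by rewrite /Xv !mul0n mul0r.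
  have [ea eb ec ee] := Pt_uniq h h0; subst a b c.
  by case: ee => ->.
rewrite /delta (negbTE hm).
have nz : ~~ [&& n == 0%N, a == 0%N, b == 0%N & c == 0%N].
  apply/negP => /and4P [/eqP n0 /eqP a0 /eqP b0 /eqP c0]; subst.
  case: h => _ _ _; rewrite /Xv !mul0n mul0r sub0r => /eqP.
  by rewrite oppr_eq0 (negbTE hm).
move: nz; case: (a == 0%N); case: (b == 0%N); case: (c == 0%N); case: n {h} => [|n] //=.
Qed.

Lemma Pt_small k : - (p + q + r)%N%:Z < k -> k < (p * q * r)%N%:Z ->
  exists a b c e, Pt k a b c e%:Z /\ (e <= 2)%N.
Proof.
move=> h1 h2; have [a [b [c [e h]]]] := exPt k.
have [g1 _ g3] := Pt_bounds h; have := g1 h2; have := g3 h1; clear g1 g3.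
case: e h => [e|//] h le2 _; exists a, b, c, e; split=> //.
Qed.

Lemma delta_neg m : m < 0 -> delta m = 0.
Proof. by move=> hm; rewrite /delta (negbTE (ltr0_neq0 hm)). Qed.

Lemma main_int n : (1 <= n)%N -> (n < p * q * r)%N ->
  acoef p q r n - acoef p q r n.-1 = Pop Zf n%:Z.
Proof.
move=> n1 nN.
have hT : forall m, m < (p * q * r)%N%:Z ->
    cf ((1 - 'X) * 'Phi_(p * q * r)%N) m = Pop Zf m.
  apply: Q_uniq.
  - by move=> m hm; apply: cf_neg.
  - by apply: P_neg; apply: Zf_neg.
  move=> m hm; rewrite QC QP /sh.
  rewrite [X in _ - X](P_neg delta delta_neg) ?subr0; last first.
    by apply/toZ_lt; move/toZ_lt: hm; rewrite !(toZ_add, toZ_opp, toZ_nat) ?toZ0; zl.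
  apply: (@P_loc _ _ ((p * q * r)%N%:Z - 1)); last first.
    by apply/toZ_le; move/toZ_lt: hm; rewrite !(toZ_add, toZ_opp, toZ_nat) ?toZ1; zl.
  move=> m' hm'; rewrite QZ //.
  by apply/toZ_lt; move/toZ_le: hm'; rewrite !(toZ_add, toZ_opp, toZ_nat) ?toZ1; zl.
rewrite -hT ?ltz_nat // /cf /= mulrBl mul1r coefB coefXM.
by case: n n1 {nN} => [|n] //.
Qed.

Lemma dvd_sub1 (s : nat) (x y : int) :
  (toZ x = toZ y + Z.of_nat s \/ toZ x = toZ y - Z.of_nat s)%ZZ -> (s%:Z %| x - y)%Z.
Proof.
move=> h; apply/toZ_dvd; case: h => h; [exists 1%ZZ | exists (-1)%ZZ];
  rewrite toZ_sub toZ_nat; lia.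
Qed.

Lemma final n :
  (1 <= n)%N -> (n < p * q * r)%N ->
  let Fk := F p q r in
  let k : int := n%:Z in
  let Splus := [:: Fk k; Fk (k - p%:Z - q%:Z); Fk (k - q%:Z - r%:Z);
                   Fk (k - r%:Z - p%:Z)] in
  let Sminus := [:: Fk (k - p%:Z); Fk (k - q%:Z); Fk (k - r%:Z);
                    Fk (k - p%:Z - q%:Z - r%:Z)] in
  let D : rat := (acoef p q r n - acoef p q r n.-1)%:~R in
  [/\ D = ((Ncount 1 Sminus)%:R - (Ncount 1 Splus)%:R) / 2,
      D = (Ncount 0 Splus)%:R - (Ncount 0 Sminus)%:R
    & D = (Ncount 2 Splus)%:R - (Ncount 2 Sminus)%:R].
Proof.
move=> n1 nN Fk k Splus Sminus D.
have Np := N_gt0; have pp := p_gt0; have qp := q_gt0; have rp := r_gt0.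
move/ssrnat.ltP: Np => Np; move/ssrnat.ltP: pp => pp; move/ssrnat.ltP: qp => qp.
move/ssrnat.ltP: rp => rp; move/ssrnat.leP: (n1) => n1'; move/ssrnat.ltP: (nN) => nN'.
rewrite -!multE in Np nN'.
have rng : forall x : int, (toZ x <= Z.of_nat n /\ Z.of_nat n - Z.of_nat p - Z.of_nat q - Z.of_nat r <= toZ x)%ZZ ->
   - (p + q + r)%N%:Z < x /\ x < (p * q * r)%N%:Z.
  move=> x [hx1 hx2]; split; apply/toZ_lt; rewrite ?toZ_opp toZ_nat.
    rewrite -!plusE !Nat2Z.inj_add; zl.
  rewrite -!multE !Nat2Z.inj_mul; zl.
have G : forall x : int, (toZ x <= Z.of_nat n /\ Z.of_nat n - Z.of_nat p - Z.of_nat q - Z.of_nat r <= toZ x)%ZZ ->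
   exists a b c e, Pt x a b c e%:Z /\ (e <= 2)%N.
  by move=> x /rng [h1 h2]; exact: Pt_small.
have [a1 [b1 [c1 [e1 [h1 l1]]]]] := G k ltac:(rewrite /k !(toZ_add, toZ_opp, toZ_nat); zl).
have [a2 [b2 [c2 [e2 [h2 l2]]]]] := G (k - p%:Z - q%:Z) ltac:(rewrite /k !(toZ_add, toZ_opp, toZ_nat); zl).
have [a3 [b3 [c3 [e3 [h3 l3]]]]] := G (k - q%:Z - r%:Z) ltac:(rewrite /k !(toZ_add, toZ_opp, toZ_nat); zl).
have [a4 [b4 [c4 [e4 [h4 l4]]]]] := G (k - r%:Z - p%:Z) ltac:(rewrite /k !(toZ_add, toZ_opp, toZ_nat); zl).
have [a5 [b5 [c5 [f1 [g1 m1]]]]] := G (k - p%:Z) ltac:(rewrite /k !(toZ_add, toZ_opp, toZ_nat); zl).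
have [a6 [b6 [c6 [f2 [g2 m2]]]]] := G (k - q%:Z) ltac:(rewrite /k !(toZ_add, toZ_opp, toZ_nat); zl).
have [a7 [b7 [c7 [f3 [g3 m3]]]]] := G (k - r%:Z) ltac:(rewrite /k !(toZ_add, toZ_opp, toZ_nat); zl).
have [a8 [b8 [c8 [f4 [g4 m4]]]]] := G (k - p%:Z - q%:Z - r%:Z) ltac:(rewrite /k !(toZ_add, toZ_opp, toZ_nat); zl).
have Fnat : forall x a b c e, Pt x a b c e%:Z -> Fk x = e%:R.
  by move=> x a b c e h; rewrite /Fk (F_of h) -pmulrn.
rewrite /Splus /Sminus (Fnat _ _ _ _ _ h1) (Fnat _ _ _ _ _ h2) (Fnat _ _ _ _ _ h3).
rewrite (Fnat _ _ _ _ _ h4) (Fnat _ _ _ _ _ g1) (Fnat _ _ _ _ _ g2).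
rewrite (Fnat _ _ _ _ _ g3) (Fnat _ _ _ _ _ g4).
apply: finish => //.
have dA : forall x y, (toZ x = toZ y + Z.of_nat p \/ toZ x = toZ y - Z.of_nat p)%ZZ ->
  (p%:Z %| x - y)%Z by move=> x y; exact: dvd_sub1.
have dB : forall x y, (toZ x = toZ y + Z.of_nat q \/ toZ x = toZ y - Z.of_nat q)%ZZ ->
  (q%:Z %| x - y)%Z by move=> x y; exact: dvd_sub1.
have dC : forall x y, (toZ x = toZ y + Z.of_nat r \/ toZ x = toZ y - Z.of_nat r)%ZZ ->
  (r%:Z %| x - y)%Z by move=> x y; exact: dvd_sub1.
have ea1 := coordA h1 g1 (dA k (k - p%:Z) ltac:(rewrite /k !(toZ_add, toZ_opp, toZ_nat); zl)).
have ea2 := coordA h2 g2 (dA (k - p%:Z - q%:Z) (k - q%:Z) ltac:(rewrite /k !(toZ_add, toZ_opp, toZ_nat); zl)).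
have ea3 := coordA h3 g4 (dA (k - q%:Z - r%:Z) (k - p%:Z - q%:Z - r%:Z) ltac:(rewrite /k !(toZ_add, toZ_opp, toZ_nat); zl)).
have ea4 := coordA h4 g3 (dA (k - r%:Z - p%:Z) (k - r%:Z) ltac:(rewrite /k !(toZ_add, toZ_opp, toZ_nat); zl)).
have eb1 := coordB h1 g2 (dB k (k - q%:Z) ltac:(rewrite /k !(toZ_add, toZ_opp, toZ_nat); zl)).
have eb2 := coordB h2 g1 (dB (k - p%:Z - q%:Z) (k - p%:Z) ltac:(rewrite /k !(toZ_add, toZ_opp, toZ_nat); zl)).
have eb3 := coordB h3 g3 (dB (k - q%:Z - r%:Z) (k - r%:Z) ltac:(rewrite /k !(toZ_add, toZ_opp, toZ_nat); zl)).
have eb4 := coordB h4 g4 (dB (k - r%:Z - p%:Z) (k - p%:Z - q%:Z - r%:Z) ltac:(rewrite /k !(toZ_add, toZ_opp, toZ_nat); zl)).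
have ec1 := coordC h1 g3 (dC k (k - r%:Z) ltac:(rewrite /k !(toZ_add, toZ_opp, toZ_nat); zl)).
have ec2 := coordC h2 g4 (dC (k - p%:Z - q%:Z) (k - p%:Z - q%:Z - r%:Z) ltac:(rewrite /k !(toZ_add, toZ_opp, toZ_nat); zl)).
have ec3 := coordC h3 g2 (dC (k - q%:Z - r%:Z) (k - q%:Z) ltac:(rewrite /k !(toZ_add, toZ_opp, toZ_nat); zl)).
have ec4 := coordC h4 g1 (dC (k - r%:Z - p%:Z) (k - p%:Z) ltac:(rewrite /k !(toZ_add, toZ_opp, toZ_nat); zl)).
subst a5 a6 a8 a7 b6 b5 b7 b8 c7 c8 c6 c5.
case: h1 => _ _ _ /(congr1 toZ) E1; case: h2 => _ _ _ /(congr1 toZ) E2.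
case: h3 => _ _ _ /(congr1 toZ) E3; case: h4 => _ _ _ /(congr1 toZ) E4.
case: g1 => _ _ _ /(congr1 toZ) F1; case: g2 => _ _ _ /(congr1 toZ) F2.
case: g3 => _ _ _ /(congr1 toZ) F3; case: g4 => _ _ _ /(congr1 toZ) F4.
rewrite /k /Xv !(toZ_add, toZ_opp, toZ_mul, toZ_nat) in E1 E2 E3 E4 F1 F2 F3 F4.
rewrite ?Nat2Z.inj_add ?Nat2Z.inj_mul in E1 E2 E3 E4 F1 F2 F3 F4.
have hz : ((Z.of_nat e1 + Z.of_nat e2 + Z.of_nat e3 + Z.of_nat e4
            - (Z.of_nat f1 + Z.of_nat f2 + Z.of_nat f3 + Z.of_nat f4))
           * Z.of_nat (p * q * r) = 0)%ZZ by rewrite !Nat2Z.inj_mul; zl.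
apply: Nat2Z.inj; rewrite !Nat2Z.inj_add.
have hN : Z.of_nat (p * q * r) <> 0%ZZ.
  by rewrite -!multE; clean; lia.
have := Z.mul_eq_0_l _ _ hz hN; lia.
rewrite main_int // /Pop /sh.
have -> : n%:Z - p%:Z - r%:Z = k - r%:Z - p%:Z by rewrite /k addrAC.
by rewrite (Zf_of h1) (Zf_of h2) (Zf_of h3) (Zf_of h4) (Zf_of g1) (Zf_of g2)
  (Zf_of g3) (Zf_of g4).
Qed.

End Main.
Unset Implicit Arguments.

Theorem lemma6 (p q r n : nat) :
  prime p -> prime q -> prime r ->
  p != q -> q != r -> r != p ->
  (p < q)%N -> (p < r)%N ->
  (1 <= n)%N -> (n < p * q * r)%N ->
  let Fk := F p q r in
  let k : int := n%:Z in
  let Splus := [:: Fk k; Fk (k - p%:Z - q%:Z); Fk (k - q%:Z - r%:Z);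
                   Fk (k - r%:Z - p%:Z)] in
  let Sminus := [:: Fk (k - p%:Z); Fk (k - q%:Z); Fk (k - r%:Z);
                    Fk (k - p%:Z - q%:Z - r%:Z)] in
  let D : rat := (acoef p q r n - acoef p q r n.-1)%:~R in
  [/\ D = ((Ncount 1 Sminus)%:R - (Ncount 1 Splus)%:R) / 2,
      D = (Ncount 0 Splus)%:R - (Ncount 0 Sminus)%:R
    & D = (Ncount 2 Splus)%:R - (Ncount 2 Sminus)%:R].
Proof.
move=> pP qP rP npq nqr nrp _ _ n1 nN.
exact: final.
Qed.
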